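(* For a positive integer $d$ let $p(d)=\frac{3}{16}(d-1)d^2\prod_{q\mid d}\bigl(1-\frac{1}{q^2}\bigr)$ (product over prime divisors $q$ of $d$), and for $n\ge1$ let $a_n=\sum_{d\mid n}\sigma_1\bigl(\frac{n}{d}\bigr)p(d)$. Then for every $n\geq1$, \[ a_n=\frac{3}{16}\bigl[\sigma_3(n)-n\sigma_1(n)\bigr]. \]
   Context: $\sigma_\ell(m)=\sum_{d\mid m}d^\ell$ for positive integers $m$. (For odd $n$, $p(n)$ is the number of primitive type A square-tiled surfaces with $n$ squares in $\mathcal{H}(2)$ and $a_n$ the number of all type A ones; for even $n$ the quantities are defined by these formulas.) *)

(* Defs.v *)
From mathcomp Require Import all_boot all_order all_algebra.
Set Implicit Arguments. Unset Strict Implicit. Unset Printing Implicit Defensive.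
Import Order.TTheory GRing.Theory Num.Theory.
Local Open Scope ring_scope.

Definition sigma (l m : nat) : rat := \sum_(d <- divisors m) (d ^ l)%:R.

Definition pfun (d : nat) : rat :=
  (3%:R / 16%:R) * ((d%:R - 1) * (d%:R) ^+ 2 *
    \prod_(q <- primes d) (1 - (q%:R ^+ 2)^-1)).

Definition a_seq (n : nat) : rat :=
  \sum_(d <- divisors n) sigma 1 (n %/ d) * pfun d.

(* Main.v *)
Require Import Defs.
From mathcomp Require Import all_boot all_order all_algebra.
From mathcomp Require Import ring.
Import Order.TTheory GRing.Theory Num.Theory.
Lemma dvd_split d m n : 0 < m -> coprime m n -> d %| m * n ->
  d = gcdn d m * (d %/ gcdn d m) /\ (d %/ gcdn d m %| n)%N.
Proof.
move=> m0 cmn dmn.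
set a := gcdn d m.
have a0 : (0 < a)%N by rewrite gcdn_gt0 m0 orbT.
have ad : (a %| d)%N by apply: dvdn_gcdl.
have am : (a %| m)%N by apply: dvdn_gcdr.
split; first by rewrite mulnC divnK.
set c := d %/ a.
have cop : coprime c (m %/ a).
  rewrite /coprime -(eqn_pmul2r a0) muln_gcdl !divnK // mul1n.
by [].
have : (c * a %| (m %/ a) * a * n)%N by rewrite divnK // divnK.
rewrite mulnAC dvdn_pmul2r //.
by rewrite Gauss_dvdr.
Qed.

Lemma divisorsM m n : (0 < m)%N -> (0 < n)%N -> coprime m n ->
  perm_eq (divisors (m * n)) [seq a * b | a <- divisors m, b <- divisors n]%N.
Proof.
move=> m0 n0 cmn.
apply: uniq_perm; first exact: divisors_uniq.
  apply: allpairs_uniq; try exact: divisors_uniq.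
  move=> [a b] [a' b'] /allpairsP [[x y] /= [hx hy [-> ->]]].
  move=> /allpairsP [[x' y'] /= [hx' hy' [-> ->]]] /= E.
  move: hx hy hx' hy'; rewrite -!dvdn_divisors // => xm yn xm' yn'.
  have cy : coprime m y by apply: coprime_dvdr yn cmn.
  have cy' : coprime m y' by apply: coprime_dvdr yn' cmn.
  have cx : coprime n x by rewrite coprime_sym; apply: coprime_dvdl xm cmn.
  have cx' : coprime n x' by rewrite coprime_sym; apply: coprime_dvdl xm' cmn.
  have ex : x = x'.
    have := Gauss_gcdl x cy; rewrite E (Gauss_gcdl x' cy').
    by rewrite (gcdn_idPr xm) (gcdn_idPr xm').
  have ey : y = y'.
    have := Gauss_gcdr y cx; rewrite E (Gauss_gcdr y' cx').
    by rewrite (gcdn_idPr yn) (gcdn_idPr yn').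
  by rewrite ex ey.
move=> d; rewrite -dvdn_divisors ?muln_gt0 ?m0 //.
apply/idP/allpairsP.
  move=> dmn; have [E H] := @dvd_split d m n m0 cmn dmn.
  exists (gcdn d m, d %/ gcdn d m) => /=.
  by rewrite -!dvdn_divisors // dvdn_gcdr.
move=> [[x y] /= [hx hy ->]].
by rewrite dvdn_mul // dvdn_divisors.
Qed.

Local Open Scope ring_scope.

Definition J (d : nat) : rat := d%:R ^+ 2 * \prod_(q <- primes d) (1 - (q%:R ^+ 2)^-1).

Lemma J_mul a b : (0 < a)%N -> (0 < b)%N -> coprime a b -> J (a * b) = J a * J b.
Proof.
move=> a0 b0 cab.
have P : perm_eq (primes (a * b)) (primes a ++ primes b).
  apply: uniq_perm; first exact: primes_uniq.
    by rewrite cat_uniq !primes_uniq /= -coprime_has_primes // cab.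
  by move=> p; rewrite mem_cat primesM.
rewrite /J (perm_big _ P) big_cat /= natrM exprMn.
ring.
Qed.

Lemma J1 : J 1 = 1.
Proof. by rewrite /J big_nil !mulr1. Qed.

Lemma sumJ_pow p k : prime p ->
  \sum_(d <- divisors (p ^ k)) J d = (p ^ k)%:R ^+ 2.
Proof.
move=> pp.
have p1 := prime_gt1 pp.
have P : perm_eq (divisors (p ^ k)) [seq p ^ i | i <- iota 0 k.+1]%N.
  apply: uniq_perm; first exact: divisors_uniq.
    rewrite map_inj_in_uniq ?iota_uniq //.
    by move=> x y _ _; apply: expnI.
  move=> d; rewrite -dvdn_divisors ?expn_gt0 ?prime_gt0 //.
  apply/idP/mapP.
    by move=> /(dvdn_pfactor _ _ pp) [i ik ->]; exists i; rewrite // mem_iota.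
  by move=> [i]; rewrite mem_iota => /andP [_ ik] ->; apply/(dvdn_pfactor _ _ pp); exists i.
rewrite (perm_big _ P) big_map -/(index_iota 0 k.+1).
elim: k {P} => [|k IH].
  by rewrite big_nat1 expn0 J1 expr1n.
rewrite big_nat_recr //= IH.
rewrite /J primesX // primes_prime // big_seq1.
have pn0 : (p%:R : rat) != 0 by rewrite pnatr_eq0 -lt0n prime_gt0.
rewrite !natrX (exprS (p%:R) k).
by field.
Qed.

Lemma sumJ m : (0 < m)%N -> \sum_(d <- divisors m) J d = m%:R ^+ 2.
Proof.
elim/ltn_ind: m => m IH m0.
case: (ltngtP m 1) => [|m1|->]; first by rewrite ltnNge m0.
  have pp := pdiv_prime m1.
  have [r cr E] := pfactor_coprime pp m0.
  move: E; set p := pdiv m; set k := logn p m => E.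
  have r0 : (0 < r)%N by move: m0; rewrite E muln_gt0 => /andP [].
  have pk0 : (0 < p ^ k)%N by rewrite expn_gt0 prime_gt0.
  have k0 : (0 < k)%N by rewrite /k logn_gt0 mem_primes pp m0 pdiv_dvd.
  have rm : (r < m)%N.
    rewrite E ltn_Pmulr // -(expn0 p) ltn_exp2l ?prime_gt1 //.
  have crp : coprime r (p ^ k) by rewrite coprime_sym coprimeXl.
  rewrite E (perm_big _ (@divisorsM r (p ^ k) r0 pk0 crp)) big_allpairs_dep /=.
  transitivity (\sum_(a <- divisors r) \sum_(b <- divisors (p ^ k)) J a * J b).
    rewrite big_seq [RHS]big_seq; apply: eq_bigr => a ha.
    rewrite big_seq [RHS]big_seq; apply: eq_bigr => b hb.
    move: ha hb; rewrite -!dvdn_divisors // => ha hb.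
    apply: J_mul; first exact: dvdn_gt0 ha.
      exact: dvdn_gt0 hb.
    exact: coprime_dvdr hb (coprime_dvdl ha crp).
  rewrite -big_distrlr /= IH // sumJ_pow // natrM exprMn //.
by rewrite /divisors /= big_seq1 J1 expr1n.
Qed.

Lemma div_range n N (F : nat -> rat) : (0 < n)%N -> (n < N)%N ->
  \sum_(d <- divisors n) F d = \sum_(d <- iota 0 N | (d %| n)%N) F d.
Proof.
move=> n0 nN; rewrite -[RHS]big_filter; apply: perm_big.
apply: uniq_perm; [exact: divisors_uniq | by rewrite filter_uniq ?iota_uniq |].
move=> d; rewrite mem_filter mem_iota -dvdn_divisors //.
case dn: (d %| n)%N => //=.
by rewrite add0n (leq_ltn_trans (dvdn_leq n0 dn) nN).
Qed.

Arguments div_range {n N F}.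

Lemma cond_dvd n d e : ((d %| n) && (e %| n %/ d))%N = (d * e %| n)%N.
Proof.
case dn: (d %| n)%N => /=; first by rewrite dvdn_divRL // mulnC.
apply/esym; apply: contraFF dn => H.
exact: dvdn_trans (dvdn_mulr e (dvdnn d)) H.
Qed.

Lemma swap_div n (G : nat -> nat -> rat) : (0 < n)%N ->
  \sum_(d <- divisors n) \sum_(e <- divisors (n %/ d)) G d e =
  \sum_(e <- divisors n) \sum_(d <- divisors (n %/ e)) G d e.
Proof.
move=> n0.
have H : forall (G' : nat -> nat -> rat),
  \sum_(d <- divisors n) \sum_(e <- divisors (n %/ d)) G' d e =
  \sum_(d <- iota 0 n.+1) \sum_(e <- iota 0 n.+1) (if (d * e %| n)%N then G' d e else 0).
  move=> G'; rewrite (div_range n0 (ltnSn n)) big_mkcond; apply: eq_bigr => d _.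
  case dn: (d %| n)%N; last first.
    by rewrite big1 // => e _; rewrite -cond_dvd dn.
  have nd0 : (0 < n %/ d)%N by rewrite divn_gt0 ?(dvdn_gt0 n0 dn) ?(dvdn_leq n0 dn).
  rewrite (div_range (N := n.+1) nd0) ?ltnS ?leq_div // big_mkcond.
  by apply: eq_bigr => e _; rewrite -cond_dvd dn.
rewrite H H exchange_big /=; apply: eq_bigr => d _; apply: eq_bigr => e _.
by rewrite mulnC.
Qed.

Lemma refl_div n (F : nat -> rat) : (0 < n)%N ->
  \sum_(d <- divisors n) F d = \sum_(d <- divisors n) F (n %/ d)%N.
Proof.
move=> n0; rewrite -(big_map (fun d => n %/ d)%N xpredT); apply: perm_big.
apply: uniq_perm; first exact: divisors_uniq.
  rewrite map_inj_in_uniq ?divisors_uniq // => x y.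
  rewrite -!dvdn_divisors // => hx hy E.
  have dd : forall z, (z %| n)%N -> (n %/ (n %/ z))%N = z.
    by move=> z hz; rewrite divnA // mulKn.
  by rewrite -(dd x hx) E dd.
move=> d; apply/idP/mapP.
  rewrite -dvdn_divisors // => hd; exists (n %/ d)%N.
    by rewrite -dvdn_divisors // dvdn_div.
  by rewrite divnA // mulKn // (dvdn_gt0 n0 hd).
move=> [x hx ->]; rewrite -dvdn_divisors // in hx; rewrite -dvdn_divisors //; exact: dvdn_div.
Qed.

Lemma divdiv n d e : (d %| n)%N -> (e %| n %/ d)%N -> (n %/ d %/ e * d = n %/ e)%N.
Proof.
move=> dn en.
have de : (d * e %| n)%N by rewrite -cond_dvd dn en.
have edn : (e %| n)%N by apply: dvdn_trans de; apply: dvdn_mull.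
rewrite -divnMA (mulnC d e) divnMA divnK // dvdn_divRL // mulnC.
Qed.

Lemma divs_gt0 n e : (0 < n)%N -> e \in divisors n -> (0 < n %/ e)%N /\ (e %| n)%N.
Proof.
move=> n0; rewrite -dvdn_divisors // => en; split => //.
by rewrite divn_gt0 ?(dvdn_gt0 n0 en) ?(dvdn_leq n0 en).
Qed.

Lemma sumY n : (0 < n)%N ->
  \sum_(d <- divisors n) sigma 1 (n %/ d) * J d = n%:R * sigma 1 n.
Proof.
move=> n0.
transitivity (\sum_(d <- divisors n) \sum_(e <- divisors (n %/ d)) (e%:R * J d)).
  by apply: eq_bigr => d _; rewrite /sigma mulr_suml; apply: eq_bigr => e _; rewrite expn1.
rewrite swap_div //.
transitivity (\sum_(e <- divisors n) (n%:R : rat) * ((n %/ e)%N)%:R).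
  rewrite big_seq [RHS]big_seq; apply: eq_bigr => e he.
  have [ne0 en] := divs_gt0 _ _ n0 he.
  rewrite -mulr_sumr sumJ // expr2 mulrA -natrM.
  by rewrite mulnC divnK.
rewrite -mulr_sumr /sigma [X in _ = _ * X](refl_div _ _ n0); congr (_ * _).
Qed.
Lemma sumX n : (0 < n)%N ->
  \sum_(d <- divisors n) sigma 1 (n %/ d) * (d%:R * J d) = sigma 3 n.
Proof.
move=> n0.
transitivity (\sum_(d <- divisors n) \sum_(e <- divisors (n %/ d)) (((n %/ e)%N)%:R * J d)).
  rewrite big_seq [RHS]big_seq; apply: eq_bigr => d hd.
  have [nd0 dn] := divs_gt0 _ _ n0 hd.
  rewrite /sigma (refl_div _ _ nd0) mulr_suml.
  rewrite big_seq [RHS]big_seq; apply: eq_bigr => e he.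
  have [_ en] := divs_gt0 _ _ nd0 he.
  by rewrite expn1 mulrA -natrM divdiv.
rewrite swap_div //.
rewrite /sigma [RHS](refl_div _ _ n0).
rewrite big_seq [RHS]big_seq; apply: eq_bigr => e he.
have [ne0 en] := divs_gt0 _ _ n0 he.
rewrite -mulr_sumr sumJ // natrX.
by rewrite -exprS.
Qed.

Theorem mainTheorem6 (n : nat) : (1 <= n)%N ->
  a_seq n = (3%:R / 16%:R) * (sigma 3 n - n%:R * sigma 1 n).
Proof.
move=> n0.
rewrite -sumX // -sumY // /a_seq mulrBr !mulr_sumr -sumrB.
apply: eq_bigr => d _.
rewrite /pfun /J.
ring.
Qed.
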